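(* Assume $\sigma_1(x)=\tfrac12\sigma_1''(0)(x-a_1)(x-b_1)$ and $\sigma_2(x)=\tfrac12\sigma_2''(0)(x-a_2)(x-b_2)$ with $\sigma_1''(0)\ne0$, $\sigma_2''(0)\ne0$ and real zeros satisfying $a_2<a_1<0<b_1<b_2$, and assume $0<q^2\Lambda_q<1$, where $\Lambda_q=q^{-2}\Big[1+\frac{(1-q^{-1})\tau'(0)}{\frac12\sigma_1''(0)}\Big]$. Put $a=a_1$, $b=b_1$ and $$\rho(x)=\frac{(qx/a,\,qx/b;q)_\infty}{(x/a_2,\,x/b_2;q)_\infty}.$$ Then there exist polynomials $P_n$, $n\in\mathbb{N}_0$, with $P_n$ of degree $n$ a solution of the q-EHT with $\lambda=\lambda_n$, and nonzero constants $d_n^2$, such that for all $m,n\in\mathbb{N}_0$ $$\int_a^b P_n(x)P_m(x)\rho(x)\,d_qx=d_n^2\delta_{mn},$$ i.e. orthogonality with respect to $\rho$ supported on $\{q^ka\}_{k\in\mathbb{N}_0}\cup\{q^kb\}_{k\in\mathbb{N}_0}$.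
   Context: Throughout $0<q<1$. For a function $y$ and $\zeta\in\{q,q^{-1}\}$, $D_\zeta y(x)=\frac{y(x)-y(\zeta x)}{(1-\zeta)x}$ for $x\ne0$ and $D_\zeta y(0)=y'(0)$; $[n]_q=\frac{1-q^n}{1-q}$. Let $\sigma_1$ be a real polynomial of degree at most two, $\tau(x)=\tau'(0)x+\tau(0)$ a real polynomial with $\tau'(0)\ne0$, and $\sigma_2(x):=q[\sigma_1(x)+(1-q^{-1})x\tau(x)]$. The q-EHT with parameter $n$ is $\sigma_1(x)D_{q^{-1}}D_qy(x)+\tau(x)D_qy(x)+\lambda_ny(x)=0$, $\lambda_n=-[n]_q\big(\tau'(0)+\tfrac12[n-1]_{q^{-1}}\sigma_1''(0)\big)$. $(\alpha;q)_\infty=\prod_{k\ge0}(1-\alpha q^k)$, $(\alpha_1,\dots,\alpha_r;q)_\infty=\prod_i(\alpha_i;q)_\infty$. For $a<0<b$, $\int_a^b f(x)\,d_qx=(1-q)b\sum_{j\ge0}q^jf(q^jb)+(1-q)(-a)\sum_{j\ge0}q^jf(q^ja)$. *)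

(* Defs.v *)
From Stdlib Require Import Reals.
From Coquelicot Require Import Coquelicot.
Open Scope R_scope.

Fixpoint qpoch_fin (alpha q : R) (n : nat) : R :=
  match n with
  | O => 1
  | S m => qpoch_fin alpha q m * (1 - alpha * q ^ m)
  end.

Definition qpoch_inf (alpha q : R) : R :=
  real (Lim_seq (fun n => qpoch_fin alpha q n)).

Definition qnum (q : R) (n : Z) : R := (1 - powerRZ q n) / (1 - q).

Definition Dq (zeta : R) (y : R -> R) (x : R) : R :=
  if Req_EM_T x 0 then Derive y 0
  else (y x - y (zeta * x)) / ((1 - zeta) * x).

Definition jackson_right (q : R) (f : R -> R) (b : R) : nat -> R :=
  fun j => q ^ j * f (q ^ j * b).

(* Jackson q-integral  int_a^b f(x) d_q x  for a < 0 < b *)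
Definition jackson (q : R) (f : R -> R) (a b : R) : R :=
  (1 - q) * b * Series (jackson_right q f b)
  + (1 - q) * (- a) * Series (jackson_right q f a).

Definition jackson_ex (q : R) (f : R -> R) (a b : R) : Prop :=
  ex_series (jackson_right q f b) /\ ex_series (jackson_right q f a).

Definition is_poly_deg (P : R -> R) (n : nat) : Prop :=
  exists c : nat -> R, c n <> 0 /\
    forall x, P x = sum_f_R0 (fun k => c k * x ^ k) n.

(* Main.v *)
Require Import Defs.
From Stdlib Require Import Reals.
From Coquelicot Require Import Coquelicot.
From Stdlib Require Import Lra Lia Psatz Classical FunctionalExtensionality.
Open Scope R_scope.

Definition peval (c : nat -> R) (n : nat) (x : R) : R :=
  sum_f_R0 (fun k => c k * x ^ k) n.
Definition shiftc (c : nat -> R) (k : nat) : R := c (S k).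

Lemma peval_S c n x : peval c (S n) x = c 0%nat + x * peval (shiftc c) n x.
Proof.
  unfold peval, shiftc; induction n.
  - simpl; ring.
  - change (sum_f_R0 (fun k => c k * x ^ k) (S (S n))) with
      (sum_f_R0 (fun k => c k * x ^ k) (S n) + c (S (S n)) * x ^ (S (S n))).
    rewrite IHn. simpl. ring.
Qed.

Lemma peval_0 c n : peval c n 0 = c 0%nat.
Proof.
  induction n. unfold peval; simpl; ring.
  rewrite peval_S. ring.
Qed.

Lemma lim_unique (u : nat -> R) (l1 l2 : R) :
  is_lim_seq u l1 -> is_lim_seq u l2 -> l1 = l2.
Proof.
  intros H1 H2. apply is_lim_seq_unique in H1. apply is_lim_seq_unique in H2.
  rewrite H1 in H2. now injection H2.
Qed.

Lemma peval_lim0 c n (u : nat -> R) :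
  is_lim_seq u 0 -> is_lim_seq (fun N => peval c n (u N)) (c 0%nat).
Proof.
  intros Hu. revert c. induction n; intros c.
  - apply is_lim_seq_ext with (fun _ => c 0%nat).
    intros; unfold peval; simpl; ring. apply is_lim_seq_const.
  - apply is_lim_seq_ext with (fun N => c 0%nat + u N * peval (shiftc c) n (u N)).
    intros; now rewrite peval_S.
    assert (H : is_lim_seq (fun N => c 0%nat + u N * peval (shiftc c) n (u N))
                   (c 0%nat + 0 * shiftc c 0%nat)).
    { apply is_lim_seq_plus'. apply is_lim_seq_const.
      apply is_lim_seq_mult'. exact Hu. apply IHn. }
    replace (c 0%nat + 0 * shiftc c 0%nat) with (c 0%nat) in H by ring. exact H.
Qed.

Lemma peval_ex_derive c n x : ex_derive (peval c n) x.
Proof.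
  revert c x; induction n; intros c x.
  - apply ex_derive_ext with (fun _ => c 0%nat).
    intros; unfold peval; simpl; ring. apply ex_derive_const.
  - apply ex_derive_ext with (fun y => c 0%nat + y * peval (shiftc c) n y).
    intros; now rewrite peval_S.
    auto_derive. apply IHn.
Qed.

Lemma peval_Derive0 c n : Derive (peval c (S n)) 0 = c 1%nat.
Proof.
  rewrite (Derive_ext _ (fun y => c 0%nat + y * peval (shiftc c) n y)).
  2: intros; now rewrite peval_S.
  rewrite Derive_plus. rewrite Derive_const. rewrite Derive_mult.
  rewrite Derive_id. rewrite peval_0. unfold shiftc. ring.
  apply ex_derive_id. apply peval_ex_derive. apply ex_derive_const.
  eapply ex_derive_mult. apply ex_derive_id. apply peval_ex_derive.
Qed.

Definition dco (z : R) (c : nat -> R) (k : nat) : R :=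
  c (S k) * ((1 - z ^ (S k)) / (1 - z)).

Lemma peval_diff z c N x : z <> 1 ->
  peval c (S N) x - peval c (S N) (z * x) = (1 - z) * x * peval (dco z c) N x.
Proof.
  intros Hz. assert (1 - z <> 0) by lra.
  induction N.
  - unfold peval, dco; simpl. field. auto.
  - unfold peval in *.
    change (sum_f_R0 (fun k => c k * x ^ k) (S (S N))) with
      (sum_f_R0 (fun k => c k * x ^ k) (S N) + c (S (S N)) * x ^ (S (S N))).
    change (sum_f_R0 (fun k => c k * (z * x) ^ k) (S (S N))) with
      (sum_f_R0 (fun k => c k * (z*x) ^ k) (S N) + c (S (S N)) * (z*x) ^ (S (S N))).
    change (sum_f_R0 (fun k => dco z c k * x ^ k) (S N)) with
      (sum_f_R0 (fun k => dco z c k * x ^ k) N + dco z c (S N) * x ^ (S N)).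
    rewrite Rmult_plus_distr_l, <- IHN. unfold dco.
    rewrite Rpow_mult_distr. simpl. field. auto.
Qed.

Lemma Dq_peval z c N : z <> 1 -> Dq z (peval c (S N)) = peval (dco z c) N.
Proof.
  intros Hz. apply functional_extensionality; intros x.
  unfold Dq. destruct (Req_EM_T x 0) as [->|Hx].
  - rewrite peval_Derive0, peval_0. unfold dco. simpl. field. lra.
  - rewrite peval_diff by auto. field. split; auto. lra.
Qed.

Lemma pow_le1 q n : 0 < q < 1 -> 0 < q ^ n <= 1.
Proof.
  intros Hq. split. apply pow_lt; lra.
  induction n; simpl; [lra|]. nra.
Qed.

Lemma lt1_pow q n k : 0 < q < 1 -> k < 1 -> q ^ n * k < 1.
Proof.
  intros Hq Hk. destruct (pow_le1 q n Hq).
  destruct (Rle_lt_dec k 0); nra.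
Qed.

Lemma qfin_pos k q n : 0 < q < 1 -> k < 1 -> 0 < qpoch_fin k q n.
Proof.
  intros Hq Hk. induction n; simpl. lra.
  apply Rmult_lt_0_compat; auto.
  rewrite Rmult_comm. pose proof (lt1_pow q n k Hq Hk). lra.
Qed.

Lemma exp_mono x y : x <= y -> exp x <= exp y.
Proof. intros H. destruct (Rle_lt_or_eq_dec x y H). left; apply exp_increasing; auto. subst; lra. Qed.

Lemma qfin_conv k q : 0 < q < 1 -> k < 1 ->
  exists l, 0 < l /\ is_lim_seq (qpoch_fin k q) l.
Proof.
  intros Hq Hk.
  destruct (Rle_lt_dec k 0) as [Hk0|Hk0].
  -
    assert (Hinc : forall n, qpoch_fin k q n <= qpoch_fin k q (S n)).
    { intros n; simpl. pose proof (qfin_pos k q n Hq Hk).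
      destruct (pow_le1 q n Hq). assert (0 <= - k * q ^ n) by nra.
      assert (0 <= qpoch_fin k q n * (- k * q ^ n)) by (apply Rmult_le_pos; lra). nra. }
    assert (Hb : forall n, qpoch_fin k q n <= exp (- k * ((1 - q ^ n) / (1 - q)))).
    { induction n; simpl.
      - replace (- k * ((1 - 1) / (1 - q))) with 0 by (field; lra). rewrite exp_0; lra.
      - pose proof (exp_ineq1_le (- k * q ^ n)).
        pose proof (qfin_pos k q n Hq Hk).
        replace (- k * ((1 - q * q ^ n) / (1 - q))) with
          (- k * ((1 - q ^ n) / (1 - q)) + (- k * q ^ n)) by (field; lra).
        rewrite exp_plus.
        destruct (pow_le1 q n Hq).
        assert (0 <= - k * q ^ n) by nra.
        apply Rmult_le_compat; try lra. }
    assert (Hb' : forall n, qpoch_fin k q n <= exp (- k / (1 - q))).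
    { intros n. eapply Rle_trans. apply Hb. apply exp_mono.
      destruct (pow_le1 q n Hq).
      assert (0 < / (1 - q)) by (apply Rinv_0_lt_compat; lra).
      assert (0 <= -k * (q^n * /(1-q))) by (apply Rmult_le_pos; [lra| apply Rmult_le_pos; lra]).
      unfold Rdiv. nra. }
    destruct (ex_finite_lim_seq_incr _ _ Hinc Hb') as [l Hl].
    exists l; split; auto.
    pose proof (is_lim_seq_incr_compare _ _ Hl Hinc 0). simpl in H. lra.
  -
    assert (Hdec : forall n, qpoch_fin k q (S n) <= qpoch_fin k q n).
    { intros n; simpl. pose proof (qfin_pos k q n Hq Hk).
      destruct (pow_le1 q n Hq). assert (0 <= k * q ^ n) by nra.
      assert (0 <= qpoch_fin k q n * (k * q ^ n)) by (apply Rmult_le_pos; lra). nra. }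
    assert (Hb : forall n, exp (- (k / (1 - k)) * ((1 - q ^ n) / (1 - q))) <= qpoch_fin k q n).
    { induction n; simpl.
      - replace (- (k / (1 - k)) * ((1 - 1) / (1 - q))) with 0 by (field; lra). rewrite exp_0; lra.
      - replace (- (k / (1 - k)) * ((1 - q * q ^ n) / (1 - q))) with
          (- (k / (1 - k)) * ((1 - q ^ n) / (1 - q)) + (- (k * q ^ n / (1 - k)))) by (field; lra).
        rewrite exp_plus.
        destruct (pow_le1 q n Hq).
        assert (Hf : exp (- (k * q ^ n / (1 - k))) <= 1 - k * q ^ n).
        { set (y := k * q ^ n).
          assert (0 <= y <= k) by (unfold y; nra).
          pose proof (exp_ineq1_le (y / (1 - k))).
          pose proof (exp_pos (y / (1 - k))).
          rewrite exp_Ropp.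
          assert (1 / (1 - y) <= exp (y / (1 - k))).
          { eapply Rle_trans; [|apply H2].
            assert (E: 1 + y/(1-k) - 1/(1-y) = y*(k-y) / ((1-k)*(1-y))) by (field; lra).
            assert (0 <= y*(k-y)/((1-k)*(1-y))).
            { unfold Rdiv; apply Rmult_le_pos; [nra| left; apply Rinv_0_lt_compat; nra]. }
            lra. }
          apply (Rmult_le_reg_r (exp (y / (1 - k)))). auto.
          rewrite Rinv_l by lra.
          apply (Rmult_le_reg_l (/ (1 - y))). apply Rinv_0_lt_compat; lra.
          rewrite <- Rmult_assoc, Rinv_l by lra. lra. }
        apply Rmult_le_compat; try lra. left; apply exp_pos. left; apply exp_pos. }
    set (m := exp (- (k / (1 - k)) * (1 / (1 - q)))).
    assert (Hb' : forall n, m <= qpoch_fin k q n).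
    { intros n. eapply Rle_trans; [|apply Hb]. unfold m.
      destruct (pow_le1 q n Hq).
      apply exp_mono.
      assert (0 < k / (1 - k)) by (apply Rdiv_lt_0_compat; lra).
      assert (0 < / (1 - q)) by (apply Rinv_0_lt_compat; lra).
      unfold Rdiv in *.
      assert (0 <= (k * / (1 - k)) * (q^n * /(1-q))) by (apply Rmult_le_pos; [lra| apply Rmult_le_pos; lra]).
      nra. }
    destruct (ex_finite_lim_seq_decr _ _ Hdec Hb') as [l Hl].
    exists l; split; auto.
    assert (0 < m) by apply exp_pos.
    pose proof (is_lim_seq_le (fun _ => m) _ m l Hb' (is_lim_seq_const m) Hl).
    simpl in H0. lra.
Qed.

Lemma qinf_lim k q : 0 < q < 1 -> k < 1 ->
  0 < qpoch_inf k q /\ is_lim_seq (qpoch_fin k q) (qpoch_inf k q).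
Proof.
  intros Hq Hk. destruct (qfin_conv k q Hq Hk) as [l [Hl Hlim]].
  unfold qpoch_inf.
  assert (E : Lim_seq (fun n => qpoch_fin k q n) = l) by (apply is_lim_seq_unique; exact Hlim).
  rewrite E. simpl. auto.
Qed.

Lemma qfin_add k q N M :
  qpoch_fin k q (N + M) = qpoch_fin k q N * qpoch_fin (q ^ N * k) q M.
Proof.
  induction M.
  - rewrite Nat.add_0_r. simpl. ring.
  - rewrite Nat.add_succ_r. simpl. rewrite IHM. rewrite pow_add. ring.
Qed.

Lemma qinf_shift k q N : 0 < q < 1 -> k < 1 ->
  qpoch_inf k q = qpoch_fin k q N * qpoch_inf (q ^ N * k) q.
Proof.
  intros Hq Hk.
  destruct (qinf_lim k q Hq Hk) as [_ H1].
  destruct (qinf_lim (q ^ N * k) q Hq (lt1_pow q N k Hq Hk)) as [_ H2].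
  apply (lim_unique (fun M => qpoch_fin k q (M + N))).
  - apply (is_lim_seq_incr_n (qpoch_fin k q) N). auto.
  - apply is_lim_seq_ext with (fun M => qpoch_fin k q N * qpoch_fin (q ^ N * k) q M).
    intros M. rewrite Nat.add_comm. now rewrite qfin_add.
    apply is_lim_seq_mult'. apply is_lim_seq_const. auto.
Qed.

Lemma qinf_rec k q : 0 < q < 1 -> k < 1 ->
  qpoch_inf k q = (1 - k) * qpoch_inf (q * k) q.
Proof.
  intros Hq Hk. rewrite (qinf_shift k q 1) by auto. simpl. f_equal. ring.
  f_equal. ring.
Qed.

Lemma qinf_pos k q : 0 < q < 1 -> k < 1 -> 0 < qpoch_inf k q.
Proof. intros; apply qinf_lim; auto. Qed.

Lemma qinf_lim1 k q : 0 < q < 1 -> k < 1 ->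
  is_lim_seq (fun N => qpoch_inf (q ^ N * k) q) 1.
Proof.
  intros Hq Hk.
  destruct (qinf_lim k q Hq Hk) as [Hp Hl].
  apply is_lim_seq_ext with (fun N => qpoch_inf k q / qpoch_fin k q N).
  { intros N. rewrite (qinf_shift k q N) at 1 by auto. field.
    apply Rgt_not_eq, qfin_pos; auto. }
  replace 1 with (qpoch_inf k q / qpoch_inf k q) by (field; lra).
  apply is_lim_seq_div'. apply is_lim_seq_const. auto. lra.
Qed.

Section Eig.
Variables q s0 s1 s2 t0 t1 : R.
Hypothesis Hq : 0 < q < 1.

Definition sig1 x := s2 * x ^ 2 + s1 * x + s0.
Definition sig2 x := q * (sig1 x + (1 - / q) * x * (t1 * x + t0)).
Definition Acf k := (q^2*s2*((/q)^k - 1) + (q*s2 + (q-1)*t1)*(q^k - 1))/(1-q)^2.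
Definition Bcf k := (q^2*s1*((/q)^k - 1) + (q*s1 + (q-1)*t0)*(q^k - 1))/(1-q)^2.
Definition Ccf k := (q^2*s0*((/q)^k - 1) + q*s0*(q^k - 1))/(1-q)^2.

Lemma Gk k x : q^2*sig1 x*((/q)^k - 1) + sig2 x*(q^k - 1)
  = (1-q)^2*(Acf k * x^2 + Bcf k * x + Ccf k).
Proof.
  unfold sig2, sig1, Acf, Bcf, Ccf. set (u := (/q)^k). set (v := q^k).
  field. lra.
Qed.

Lemma sum_id c N x lam :
  q^2*sig1 x*(peval c N (x/q) - peval c N x) + sig2 x*(peval c N (q*x) - peval c N x)
  + (1-q)^2*x^2*lam*peval c N x
  = sum_f_R0 (fun k => c k * x^k * ((1-q)^2*((Acf k + lam)*x^2 + Bcf k*x + Ccf k))) N.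
Proof.
  induction N.
  - unfold peval; cbn [sum_f_R0]. pose proof (Gk 0 x) as G. rewrite !pow_O in *.
    replace ((1 - q) ^ 2 * ((Acf 0 + lam) * x ^ 2 + Bcf 0 * x + Ccf 0))
      with ((1 - q) ^ 2 * (Acf 0 * x ^ 2 + Bcf 0 * x + Ccf 0) + (1-q)^2*x^2*lam) by ring.
    rewrite <- G. ring.
  - unfold peval in *.
    change (sum_f_R0 (fun k => c k * (x/q) ^ k) (S N)) with
      (sum_f_R0 (fun k => c k * (x/q) ^ k) N + c (S N) * (x/q) ^ (S N)).
    change (sum_f_R0 (fun k => c k * (q*x) ^ k) (S N)) with
      (sum_f_R0 (fun k => c k * (q*x) ^ k) N + c (S N) * (q*x) ^ (S N)).
    change (sum_f_R0 (fun k => c k * x ^ k) (S N)) with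
      (sum_f_R0 (fun k => c k * x ^ k) N + c (S N) * x ^ (S N)).
    match goal with |- _ = sum_f_R0 ?f (S N) => change (sum_f_R0 f (S N)) with (sum_f_R0 f N + f (S N)) end.
    rewrite <- IHN. cbv beta.
    pose proof (Gk (S N) x) as G.
    unfold Rdiv. rewrite !Rpow_mult_distr.
    replace ((1 - q) ^ 2 * ((Acf (S N) + lam) * x ^ 2 + Bcf (S N) * x + Ccf (S N)))
      with ((1 - q) ^ 2 * (Acf (S N) * x ^ 2 + Bcf (S N) * x + Ccf (S N)) + (1-q)^2*x^2*lam) by ring.
    rewrite <- G. ring.
Qed.

Lemma tele_sum (c al be ga : nat -> R) x N :
  be 0%nat = 0 -> ga 0%nat = 0 -> ga 1%nat = 0 ->
  sum_f_R0 (fun k => c k * x^k * (al k * x^2 + be k * x + ga k)) N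
  = sum_f_R0 (fun k => (c k * al k + c (S k) * be (S k) + c (S (S k)) * ga (S (S k))) * x^(S (S k))) N
    - c (S N) * (be (S N) * x^(S (S N)) + ga (S N) * x^(S N)) - c (S (S N)) * ga (S (S N)) * x^(S (S N)).
Proof.
  intros H0 H1 H2. induction N.
  - simpl. rewrite H0, H1, H2. ring.
  - match goal with |- sum_f_R0 ?f (S N) = _ => change (sum_f_R0 f (S N)) with (sum_f_R0 f N + f (S N)) end.
    match goal with |- _ = sum_f_R0 ?f (S N) - _ - _ => change (sum_f_R0 f (S N)) with (sum_f_R0 f N + f (S N)) end.
    rewrite IHN. simpl. ring.
Qed.


Fixpoint ecp (n i : nat) : R * R :=
  match i with
  | O => (1, 0)
  | S i' => let p := ecp n i' in
      (- (fst p * Bcf (n - i') + snd p * Ccf (S (n - i'))) / (Acf (n - S i') - Acf n), fst p)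
  end.

Definition ecoef (n k : nat) : R := if Nat.leb k n then fst (ecp n (n - k)) else 0.

Lemma ecoef_gt n k : (n < k)%nat -> ecoef n k = 0.
Proof. intros H. unfold ecoef. destruct (Nat.leb_spec k n); [lia|auto]. Qed.

Lemma ecoef_n n : ecoef n n = 1.
Proof. unfold ecoef. rewrite Nat.leb_refl, Nat.sub_diag. reflexivity. Qed.

Lemma Tk n (Hd : forall k, (k < n)%nat -> Acf k <> Acf n) k :
  ecoef n k * (Acf k - Acf n) + ecoef n (S k) * Bcf (S k) + ecoef n (S (S k)) * Ccf (S (S k)) = 0.
Proof.
  destruct (Nat.lt_total k n) as [Hlt|[Heq|Hgt]].
  - assert (Hk : (n - k = S (n - S k))%nat) by lia.
    set (i := (n - S k)%nat) in *.
    assert (E1 : ecoef n k = - (fst (ecp n i) * Bcf (S k) + snd (ecp n i) * Ccf (S (S k))) / (Acf k - Acf n)).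
    { unfold ecoef. destruct (Nat.leb_spec k n); [|lia]. rewrite Hk. simpl.
      replace (n - i)%nat with (S k) by (unfold i; lia).
      replace (n - S i)%nat with k by (unfold i; lia). reflexivity. }
    assert (E2 : ecoef n (S k) = fst (ecp n i)).
    { unfold ecoef. destruct (Nat.leb_spec (S k) n); [|lia]. reflexivity. }
    assert (E3 : ecoef n (S (S k)) = snd (ecp n i)).
    { unfold ecoef. destruct (Nat.leb_spec (S (S k)) n).
      - assert (Hi : i = S (n - S (S k))) by (unfold i; lia). rewrite Hi. reflexivity.
      - assert (Hi : i = 0%nat) by (unfold i; lia). rewrite Hi. reflexivity. }
    rewrite E1, E2, E3. field.
    intros H. apply (Hd k Hlt). lra.
  - subst. rewrite ecoef_n, !ecoef_gt by lia. ring.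
  - rewrite !ecoef_gt by lia. ring.
Qed.

Definition EqR (f : R -> R) (lam x : R) : Prop :=
  q^2*sig1 x*(f (x/q) - f x) + sig2 x*(f (q*x) - f x) + (1-q)^2*x^2*lam*f x = 0.

Lemma sum_zero (f : nat -> R) N : (forall k, f k = 0) -> sum_f_R0 f N = 0.
Proof. intros H; induction N; simpl; rewrite ?IHN, H; ring. Qed.

Lemma eig_poly n (Hd : forall k, (k < n)%nat -> Acf k <> Acf n) x :
  EqR (peval (ecoef n) (S (S n))) (- Acf n) x.
Proof.
  unfold EqR. rewrite sum_id.
  assert (Hq0 : q <> 0) by lra.
  rewrite (sum_eq _ (fun k => ecoef n k * x^k * (((1-q)^2*(Acf k - Acf n)) * x^2
                    + ((1-q)^2*Bcf k) * x + ((1-q)^2 * Ccf k)))).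
  2: { intros; ring. }
  rewrite (tele_sum (ecoef n) (fun k => (1-q)^2*(Acf k - Acf n)) (fun k => (1-q)^2*Bcf k)
           (fun k => (1-q)^2*Ccf k)).
  - rewrite sum_zero. rewrite !(ecoef_gt n) by lia. ring.
    intros k. cbv beta.
    replace (ecoef n k * ((1 - q) ^ 2 * (Acf k - Acf n)) + ecoef n (S k) * ((1 - q) ^ 2 * Bcf (S k)) +
      ecoef n (S (S k)) * ((1 - q) ^ 2 * Ccf (S (S k)))) with
      ((1-q)^2 * (ecoef n k * (Acf k - Acf n) + ecoef n (S k) * Bcf (S k) + ecoef n (S (S k)) * Ccf (S (S k))))
      by ring.
    rewrite Tk by auto. ring.
  - unfold Bcf. simpl. field. lra.
  - unfold Ccf. simpl. field. lra.
  - unfold Ccf. simpl. field. lra.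
Qed.


Lemma Acf_lt k n (Hs2 : s2 <> 0) (Hr : 0 < 1 + (1 - / q) * t1 / s2 < 1) :
  (k < n)%nat -> Acf k <> Acf n.
Proof.
  intros Hkn Heq.
  set (r := 1 + (1 - / q) * t1 / s2) in *.
  set (u := q ^ k). set (v := q ^ n).
  assert (Hq0 : q <> 0) by lra.
  assert (Hu : 0 < u <= 1) by (apply pow_le1; auto).
  assert (Hv : 0 < v) by (apply pow_lt; lra).
  assert (Hvu : v < u).
  { unfold u, v. replace n with (k + (n - k))%nat by lia. rewrite pow_add.
    assert (0 < q ^ (n - k) < 1) .
    { split. apply pow_lt; lra. apply pow_lt_1_compat. lra. lia. }
    rewrite <- (Rmult_1_r (q ^ k)) at 2. apply Rmult_lt_compat_l. apply pow_lt; lra. lra. }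
  assert (Hvq : v <= q).
  { unfold v. replace n with (S (n - 1)) by lia. simpl.
    destruct (pow_le1 q (n-1) Hq). nra. }
  assert (E : Acf n - Acf k = q * s2 * (u - v) * (q / (u * v) - r) / (1 - q)^2).
  { unfold Acf, r. rewrite !pow_inv. fold u v. field. repeat split; lra. }
  rewrite Heq, Rminus_diag in E.
  assert (q / (u * v) - r > 0).
  { assert (u * v <= q) by nra. assert (q / (u * v) >= 1).
    { apply Rle_ge. apply (Rmult_le_reg_r (u * v)). nra.
      unfold Rdiv; rewrite Rmult_assoc, Rinv_l by nra. lra. }
    lra. }
  symmetry in E. apply Rmult_integral in E. destruct E as [E|E].
  - apply Rmult_integral in E. destruct E as [E|E]; [|lra].
    apply Rmult_integral in E. destruct E as [E|E]; [|lra].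
    apply Rmult_integral in E. destruct E; lra.
  - assert (0 < (1 - q)^2) by (apply pow_lt; lra).
    apply Rinv_neq_0_compat in E; auto. lra.
Qed.

Lemma Acf_inj k n (Hs2 : s2 <> 0) (Hr : 0 < 1 + (1 - / q) * t1 / s2 < 1) :
  k <> n -> Acf k <> Acf n.
Proof.
  intros H. destruct (Nat.lt_total k n) as [h|[h|h]]; [|lia|].
  apply Acf_lt; auto. intros E. symmetry in E. revert E. apply Acf_lt; auto.
Qed.

End Eig.

Section Tele.
Variables q s0 s1 s2 t0 t1 : R.
Hypothesis Hq : 0 < q < 1.

Lemma tele (rho f g : R -> R) (lf lg c : R) :
  c <> 0 -> sig1 s0 s1 s2 c = 0 ->
  (forall N, q * rho (q ^ S N * c) * sig1 s0 s1 s2 (q ^ S N * c)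
             = rho (q ^ N * c) * sig2 q s0 s1 s2 t0 t1 (q ^ N * c)) ->
  (forall x, EqR q s0 s1 s2 t0 t1 f lf x) -> (forall x, EqR q s0 s1 s2 t0 t1 g lg x) ->
  forall N, (1-q)^2*(lf-lg)*sum_f_R0 (fun j => q^j*c*rho(q^j*c)*f(q^j*c)*g(q^j*c)) N
     = rho(q^N*c)*sig2 q s0 s1 s2 t0 t1 (q^N*c)*(f(q^N*c)*g(q^S N*c) - g(q^N*c)*f(q^S N*c))/(q^N*c).
Proof.
  intros Hc Hs Hp Ef Eg.
  assert (Hq0 : q <> 0) by lra.
  assert (HX : forall j, q ^ j * c <> 0).
  { intros j. apply Rmult_integral_contrapositive; split; auto. apply pow_nonzero; auto. }
  assert (HXq : forall j, q * (q ^ j * c) = q ^ S j * c) by (intros; simpl; ring).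
  assert (HXd : forall j, q ^ S j * c / q = q ^ j * c) by (intros; simpl; field; auto).
  induction N.
  - cbn [sum_f_R0]. specialize (Ef (q ^ 0 * c)). specialize (Eg (q ^ 0 * c)).
    unfold EqR in Ef, Eg. rewrite HXq in Ef, Eg.
    replace (q ^ 0 * c) with c in * by (simpl; ring).
    rewrite Hs in Ef, Eg.
    set (s := sig2 q s0 s1 s2 t0 t1 c) in *.
    set (f0 := f c) in *. set (g0 := g c) in *. set (f1 := f (q ^ 1 * c)) in *.
    set (g1 := g (q ^ 1 * c)) in *.
    assert (Z : (1 - q) ^ 2 * (lf - lg) * (q ^ 0 * c * rho c * f0 * g0) -
      rho c * s * (f0 * g1 - g0 * f1) / c =
      - (rho c / c) * (f0 * (q ^ 2 * 0 * (g (c / q) - g0) + s * (g1 - g0) + (1 - q) ^ 2 * c ^ 2 * lg * g0)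
           - g0 * (q ^ 2 * 0 * (f (c / q) - f0) + s * (f1 - f0) + (1 - q) ^ 2 * c ^ 2 * lf * f0))).
    { simpl. field. auto. }
    rewrite Ef, Eg in Z. lra.
  - change (sum_f_R0 (fun j => q^j*c*rho(q^j*c)*f(q^j*c)*g(q^j*c)) (S N)) with
      (sum_f_R0 (fun j => q^j*c*rho(q^j*c)*f(q^j*c)*g(q^j*c)) N
       + q^S N*c*rho(q^S N*c)*f(q^S N*c)*g(q^S N*c)).
    rewrite Rmult_plus_distr_l, IHN.
    specialize (Ef (q ^ S N * c)). specialize (Eg (q ^ S N * c)).
    unfold EqR in Ef, Eg. rewrite HXq, HXd in Ef, Eg.
    rewrite <- Hp.
    assert (Hy : q ^ S N * c = q * (q ^ N * c)) by (simpl; ring).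
    set (x := q ^ N * c) in *. set (y := q ^ S N * c) in *. set (z := q ^ S (S N) * c) in *.
    set (s1y := sig1 s0 s1 s2 y) in *. set (s2y := sig2 q s0 s1 s2 t0 t1 y) in *.
    set (r1 := rho y) in *.
    set (fx := f x) in *. set (gx := g x) in *. set (fy := f y) in *. set (gy := g y) in *.
    set (fz := f z) in *. set (gz := g z) in *.
    assert (Hx0 : x <> 0) by apply HX.
    assert (Z : q * r1 * s1y * (fx * gy - gx * fy) / x + (1 - q) ^ 2 * (lf - lg) * (y * r1 * fy * gy)
       - r1 * s2y * (fy * gz - gy * fz) / y =
       - (r1 / y) * (fy * (q ^ 2 * s1y * (gx - gy) + s2y * (gz - gy) + (1 - q) ^ 2 * y ^ 2 * lg * gy)
             - gy * (q ^ 2 * s1y * (fx - fy) + s2y * (fz - fy) + (1 - q) ^ 2 * y ^ 2 * lf * fy))).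
    { rewrite Hy. field. auto. }
    rewrite Ef, Eg in Z. lra.
Qed.

End Tele.

Lemma is_series_of_lim (a : nat -> R) (l : R) :
  is_lim_seq (fun N => sum_f_R0 a N) l -> is_series a l.
Proof.
  intros H. apply is_lim_seq_ext with (v := sum_n a) in H.
  exact H. intros; now rewrite sum_n_Reals.
Qed.

Lemma series_lim (a : nat -> R) (l : R) :
  is_series a l -> is_lim_seq (fun N => sum_f_R0 a N) l.
Proof.
  intros H. apply is_lim_seq_ext with (u := sum_n a).
  intros; now rewrite sum_n_Reals. exact H.
Qed.

Lemma ex_series_geomlim q (u : nat -> R) (l : R) : 0 < q < 1 ->
  is_lim_seq u l -> ex_series (fun j => q ^ j * u j).
Proof.
  intros Hq Hu. apply is_lim_seq_spec in Hu.
  destruct (Hu (mkposreal 1 Rlt_0_1)) as [N HN]. simpl in HN.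
  apply (ex_series_incr_n _ N).
  apply (@ex_series_le R_AbsRing R_CompleteNormedModule _ (fun k => (q ^ N * (Rabs l + 1)) * q ^ k)).
  - intros k. change norm with Rabs. simpl.
    specialize (HN (N + k)%nat ltac:(lia)).
    rewrite pow_add, Rabs_mult, Rabs_mult.
    rewrite (Rabs_pos_eq (q ^ N)) by (left; apply pow_lt; lra).
    rewrite (Rabs_pos_eq (q ^ k)) by (left; apply pow_lt; lra).
    assert (Rabs (u (N + k)%nat) <= Rabs l + 1).
    { pose proof (Rabs_triang_inv (u (N+k)%nat) l). lra. }
    assert (0 < q ^ N) by (apply pow_lt; lra). assert (0 < q ^ k) by (apply pow_lt; lra).
    assert (0 <= q ^ N * q ^ k) by nra.
    nra.
  - assert (Hg : ex_series (fun k => q ^ k)) by (apply ex_series_geom; rewrite Rabs_pos_eq; lra).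
    pose proof (@ex_series_scal_l R_AbsRing R_NormedModule (q ^ N * (Rabs l + 1)) _ Hg) as H.
    eapply ex_series_ext; [|exact H]. intros; reflexivity.
Qed.

Lemma series_ge_term (a : nat -> R) (l : R) k :
  is_series a l -> (forall n, 0 <= a n) -> a k <= l.
Proof.
  intros H Hp. apply series_lim in H.
  assert (Hinc : forall n, sum_f_R0 a n <= sum_f_R0 a (S n)).
  { intros n; simpl. specialize (Hp (S n)). lra. }
  pose proof (is_lim_seq_incr_compare _ _ H Hinc k).
  destruct k. simpl in H0. lra.
  simpl in H0. pose proof (cond_pos_sum a k Hp). lra.
Qed.

Lemma series_nonneg (a : nat -> R) (l : R) :
  is_series a l -> (forall n, 0 <= a n) -> 0 <= l.
Proof. intros H Hp. eapply Rle_trans; [apply (Hp 0%nat)|]. eapply series_ge_term; eauto. Qed.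

Lemma peval_nonvanish q b n (c : nat -> R) : 0 < q < 1 -> b <> 0 -> c n <> 0 ->
  exists j, peval c n (q ^ j * b) <> 0.
Proof.
  intros Hq Hb. revert c. induction n; intros c Hc.
  - exists 0%nat. unfold peval; simpl. rewrite Rmult_1_r. auto.
  - apply NNPP. intros Hn.
    assert (Hall : forall j, peval c (S n) (q ^ j * b) = 0).
    { intros j. apply NNPP. intros H. apply Hn. exists j. auto. }
    assert (Hlim0 : is_lim_seq (fun j => q ^ j * b) 0).
    { replace (Finite 0) with (Finite (0 * b)) by (f_equal; ring).
      apply is_lim_seq_mult'. apply is_lim_seq_geom. rewrite Rabs_pos_eq; lra.
      apply is_lim_seq_const. }
    assert (Hc0 : c 0%nat = 0).
    { apply (lim_unique (fun j => peval c (S n) (q ^ j * b))).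
      apply peval_lim0; auto.
      apply is_lim_seq_ext with (fun _ => 0). intros; now rewrite Hall.
      apply is_lim_seq_const. }
    destruct (IHn (shiftc c) Hc) as [j Hj].
    apply Hj. specialize (Hall j). rewrite peval_S, Hc0 in Hall.
    assert (q ^ j * b <> 0).
    { apply Rmult_integral_contrapositive; split; auto. apply pow_nonzero; lra. }
    rewrite Rplus_0_l in Hall. apply Rmult_integral in Hall. destruct Hall; [lra|auto].
Qed.

Section Rho.
Variables q a b a2 b2 : R.
Hypothesis Hq : 0 < q < 1.

Definition rhof x := (qpoch_inf (q * x / a) q * qpoch_inf (q * x / b) q)
    / (qpoch_inf (x / a2) q * qpoch_inf (x / b2) q).

Definition good c := c <> 0 /\ c / a2 < 1 /\ c / b2 < 1 /\ q * c / a < 1 /\ q * c / b < 1.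

Lemma good_args c N : good c ->
  (q ^ N * c) / a2 < 1 /\ (q ^ N * c) / b2 < 1 /\ q * (q ^ N * c) / a < 1 /\ q * (q ^ N * c) / b < 1.
Proof.
  intros [Hc [H1 [H2 [H3 H4]]]].
  repeat split.
  - unfold Rdiv in *. rewrite Rmult_assoc. apply lt1_pow; auto.
  - unfold Rdiv in *. rewrite Rmult_assoc. apply lt1_pow; auto.
  - replace (q * (q ^ N * c) / a) with (q ^ N * (q * c / a)) by (unfold Rdiv; ring). apply lt1_pow; auto.
  - replace (q * (q ^ N * c) / b) with (q ^ N * (q * c / b)) by (unfold Rdiv; ring). apply lt1_pow; auto.
Qed.

Lemma rho_pos x : x / a2 < 1 -> x / b2 < 1 -> q * x / a < 1 -> q * x / b < 1 -> 0 < rhof x.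
Proof.
  intros. unfold rhof. apply Rdiv_lt_0_compat; apply Rmult_lt_0_compat; apply qinf_pos; auto.
Qed.

Lemma rho_lim c : good c -> is_lim_seq (fun N => rhof (q ^ N * c)) 1.
Proof.
  intros [Hc [H1 [H2 [H3 H4]]]].
  unfold rhof.
  replace (Finite 1) with (Finite ((1 * 1) / (1 * 1))) by (f_equal; field).
  apply is_lim_seq_div'; [apply is_lim_seq_mult'|apply is_lim_seq_mult'|lra].
  - apply is_lim_seq_ext with (fun N => qpoch_inf (q ^ N * (q * c / a)) q).
    intros; f_equal; unfold Rdiv; ring. apply qinf_lim1; auto.
  - apply is_lim_seq_ext with (fun N => qpoch_inf (q ^ N * (q * c / b)) q).
    intros; f_equal; unfold Rdiv; ring. apply qinf_lim1; auto.
  - apply is_lim_seq_ext with (fun N => qpoch_inf (q ^ N * (c / a2)) q).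
    intros; f_equal; unfold Rdiv; ring. apply qinf_lim1; auto.
  - apply is_lim_seq_ext with (fun N => qpoch_inf (q ^ N * (c / b2)) q).
    intros; f_equal; unfold Rdiv; ring. apply qinf_lim1; auto.
Qed.

Variables s0 s1 s2 t0 t1 : R.
Hypothesis Ha : a <> 0.
Hypothesis Hb : b <> 0.
Hypothesis Ha2 : a2 <> 0.
Hypothesis Hb2 : b2 <> 0.
Hypothesis Hs1 : forall x, sig1 s0 s1 s2 x = s2 * (x - a) * (x - b).
Hypothesis Hs2 : forall x, sig2 q s0 s1 s2 t0 t1 x = (q * s2 * a * b / (a2 * b2)) * (x - a2) * (x - b2).

Lemma pearson x : x / a2 < 1 -> x / b2 < 1 -> q * x / a < 1 -> q * x / b < 1 ->
  q * rhof (q * x) * sig1 s0 s1 s2 (q * x) = rhof x * sig2 q s0 s1 s2 t0 t1 x.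
Proof.
  intros H1 H2 H3 H4. unfold rhof.
  rewrite (qinf_rec (q * x / a)), (qinf_rec (q * x / b)), (qinf_rec (x / a2)), (qinf_rec (x / b2)) by auto.
  replace (q * (q * x) / a) with (q * (q * x / a)) by (unfold Rdiv; ring).
  replace (q * (q * x) / b) with (q * (q * x / b)) by (unfold Rdiv; ring).
  replace (q * x / a2) with (q * (x / a2)) by (unfold Rdiv; ring).
  replace (q * x / b2) with (q * (x / b2)) by (unfold Rdiv; ring).
  assert (P1 : 0 < qpoch_inf (q * (x / a2)) q).
  { apply qinf_pos; auto. pose proof (lt1_pow q 1 _ Hq H1). simpl in H. lra. }
  assert (P2 : 0 < qpoch_inf (q * (x / b2)) q).
  { apply qinf_pos; auto. pose proof (lt1_pow q 1 _ Hq H2). simpl in H. lra. }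
  rewrite Hs1, Hs2.
  set (A1 := qpoch_inf (q * (q * x / a)) q). set (A2 := qpoch_inf (q * (q * x / b)) q).
  set (D1 := qpoch_inf (q * (x / a2)) q) in *. set (D2 := qpoch_inf (q * (x / b2)) q) in *.
  assert (1 - x / a2 <> 0) by lra. assert (1 - x / b2 <> 0) by lra.
  assert (b2 - x <> 0).
  { replace (b2 - x) with (b2 * (1 - x / b2)) by (field; auto). apply Rmult_integral_contrapositive; auto. }
  assert (a2 - x <> 0).
  { replace (a2 - x) with (a2 * (1 - x / a2)) by (field; auto). apply Rmult_integral_contrapositive; auto. }
  field. repeat split; try lra.
Qed.

End Rho.

Lemma geo_lim0 q c : 0 < q < 1 -> is_lim_seq (fun N => q ^ N * c) 0.
Proof.
  intros Hq. replace (Finite 0) with (Finite (0 * c)) by (f_equal; ring).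
  apply is_lim_seq_mult'. apply is_lim_seq_geom. rewrite Rabs_pos_eq; lra.
  apply is_lim_seq_const.
Qed.

Lemma sig2_lim q s0 s1 s2 t0 t1 (u : nat -> R) : 0 < q ->
  is_lim_seq u 0 -> is_lim_seq (fun N => sig2 q s0 s1 s2 t0 t1 (u N)) (q * s0).
Proof.
  intros Hq Hu.
  set (sc := fun k : nat => match k with 0%nat => q * s0 | 1%nat => q * s1 + (q - 1) * t0
                              | _ => q * s2 + (q - 1) * t1 end).
  apply is_lim_seq_ext with (fun N => peval sc 2 (u N)).
  - intros N. unfold peval, sc, sig2, sig1. simpl. field. lra.
  - apply (peval_lim0 sc 2 u Hu).
Qed.

Lemma Blim q s0 s1 s2 t0 t1 (rho : R -> R) cf cg M K c :
  0 < q < 1 -> c <> 0 -> is_lim_seq (fun N => rho (q ^ N * c)) 1 ->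
  is_lim_seq (fun N => rho (q ^ N * c) * sig2 q s0 s1 s2 t0 t1 (q ^ N * c) *
     (peval cf (S M) (q ^ N * c) * peval cg (S K) (q ^ S N * c)
      - peval cg (S K) (q ^ N * c) * peval cf (S M) (q ^ S N * c)) / (q ^ N * c))
   (1 * (q * s0) * (cg 0%nat * cf 1%nat - cf 0%nat * cg 1%nat
                    + q * (cf 0%nat * cg 1%nat - cg 0%nat * cf 1%nat))).
Proof.
  intros Hq Hc Hr.
  assert (Hu : is_lim_seq (fun N => q ^ N * c) 0) by (apply geo_lim0; auto).
  assert (Hv : is_lim_seq (fun N => q * (q ^ N * c)) 0) by
    (apply is_lim_seq_ext with (fun N => q ^ N * (q * c)); [intros; ring| apply geo_lim0; auto]).
  apply is_lim_seq_ext with (fun N => rho (q ^ N * c) * sig2 q s0 s1 s2 t0 t1 (q ^ N * c) *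
     (cg 0%nat * peval (shiftc cf) M (q ^ N * c) - cf 0%nat * peval (shiftc cg) K (q ^ N * c)
      + q * (peval cf (S M) (q ^ N * c) * peval (shiftc cg) K (q * (q ^ N * c))
             - peval cg (S K) (q ^ N * c) * peval (shiftc cf) M (q * (q ^ N * c))))).
  { intros N. replace (q ^ S N * c) with (q * (q ^ N * c)) by (simpl; ring).
    assert (Hx : q ^ N * c <> 0).
    { apply Rmult_integral_contrapositive; split; auto. apply pow_nonzero; lra. }
    set (x := q ^ N * c) in *. rewrite !peval_S. field. auto. }
  apply is_lim_seq_mult'. apply is_lim_seq_mult'. auto. apply sig2_lim; auto. lra.
  replace (cf 1%nat) with (shiftc cf 0) by reflexivity.
  replace (cg 1%nat) with (shiftc cg 0) by reflexivity.
  apply is_lim_seq_plus'. apply is_lim_seq_minus'.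
  apply is_lim_seq_mult'. apply is_lim_seq_const. apply peval_lim0; auto.
  apply is_lim_seq_mult'. apply is_lim_seq_const. apply peval_lim0; auto.
  apply is_lim_seq_mult'. apply is_lim_seq_const. apply is_lim_seq_minus'.
  apply is_lim_seq_mult'; apply peval_lim0; auto.
  apply is_lim_seq_mult'; apply peval_lim0; auto.
Qed.

Lemma lam_eq q s2 t1 n : 0 < q < 1 ->
  - qnum q (Z.of_nat n) * (t1 + / 2 * qnum (/ q) (Z.of_nat n - 1) * (2 * s2))
  = - Acf q s2 t1 n.
Proof.
  intros Hq. assert (q <> 0) by lra.
  unfold qnum, Acf. destruct n.
  - simpl. field. lra.
  - replace (Z.of_nat (S n) - 1)%Z with (Z.of_nat n) by lia.
    rewrite <- !pow_powerRZ. rewrite !pow_inv.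
    assert (q ^ n <> 0) by (apply pow_nonzero; auto).
    simpl. field. repeat split; auto; lra.
Qed.

Lemma peval_SS c n x : peval c (S (S n)) x = peval c n x + c (S n) * x ^ S n + c (S (S n)) * x ^ S (S n).
Proof. reflexivity. Qed.

Lemma sum_mult_l (a : nat -> R) k N : sum_f_R0 (fun j => k * a j) N = k * sum_f_R0 a N.
Proof. induction N; simpl; [ring| rewrite IHN; ring]. Qed.

Theorem theorem4p2 (q s0 s1 s2 t0 t1 a1 b1 a2 b2 : R) :
  0 < q < 1 ->
  t1 <> 0 ->
  2 * s2 <> 0 ->
  (forall x, s2 * x ^ 2 + s1 * x + s0 = / 2 * (2 * s2) * (x - a1) * (x - b1)) ->
  2 * q * (s2 + (1 - / q) * t1) <> 0 ->
  (forall x, q * ((s2 * x ^ 2 + s1 * x + s0) + (1 - / q) * x * (t1 * x + t0))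
             = / 2 * (2 * q * (s2 + (1 - / q) * t1)) * (x - a2) * (x - b2)) ->
  a2 < a1 -> a1 < 0 -> 0 < b1 -> b1 < b2 ->
  (let Lambda := / q ^ 2 * (1 + (1 - / q) * t1 / (/ 2 * (2 * s2))) in
   0 < q ^ 2 * Lambda < 1) ->
  let sigma1 := fun x => s2 * x ^ 2 + s1 * x + s0 in
  let tau := fun x => t1 * x + t0 in
  let lambda := fun n : nat =>
    - qnum q (Z.of_nat n) * (t1 + / 2 * qnum (/ q) (Z.of_nat n - 1) * (2 * s2)) in
  let a := a1 in
  let b := b1 in
  let rho := fun x =>
    (qpoch_inf (q * x / a) q * qpoch_inf (q * x / b) q)
    / (qpoch_inf (x / a2) q * qpoch_inf (x / b2) q) in
  exists (P : nat -> R -> R) (d2 : nat -> R),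
    (forall n, is_poly_deg (P n) n) /\
    (forall n x, sigma1 x * Dq (/ q) (Dq q (P n)) x + tau x * Dq q (P n) x
                 + lambda n * P n x = 0) /\
    (forall n, d2 n <> 0) /\
    (forall m n, jackson_ex q (fun x => P n x * P m x * rho x) a b /\
                 jackson q (fun x => P n x * P m x * rho x) a b
                 = if Nat.eq_dec m n then d2 n else 0).
Proof.
  intros Hq Ht1 Hs2 H4 Hc2 H6 Haa Ha0 Hb0 Hbb HL sigma1 tau lambda a b rho.
  cbv zeta in HL.
  assert (Hq0 : q <> 0) by lra.
  assert (Hs2' : s2 <> 0) by lra.
  assert (Hr : 0 < 1 + (1 - / q) * t1 / s2 < 1).
  { replace (1 + (1 - / q) * t1 / s2) with
      (q ^ 2 * (/ q ^ 2 * (1 + (1 - / q) * t1 / (/ 2 * (2 * s2))))); auto.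
    field. auto. }
  assert (Hd : forall k n, (k < n)%nat -> Acf q s2 t1 k <> Acf q s2 t1 n).
  { intros k n Hkn. apply Acf_inj; auto. lia. }
  assert (Hsig1 : forall x, sig1 s0 s1 s2 x = s2 * (x - a) * (x - b)).
  { intros x. unfold sig1. rewrite H4. unfold a, b. field. }
  assert (Hs0 : s0 = s2 * a * b).
  { pose proof (Hsig1 0). unfold sig1 in H. lra. }
  assert (Hsig2 : forall x, sig2 q s0 s1 s2 t0 t1 x = (q * s2 * a * b / (a2 * b2)) * (x - a2) * (x - b2)).
  { intros x. unfold sig2, sig1. rewrite H6.
    pose proof (H6 0) as H0. rewrite Hs0 in H0.
    assert (a2 <> 0) by lra. assert (b2 <> 0) by lra.
    replace (/ 2 * (2 * q * (s2 + (1 - / q) * t1))) with (q * s2 * a * b / (a2 * b2)); auto.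
    apply (Rmult_eq_reg_r (a2 * b2)). 2: nra.
    unfold Rdiv. rewrite Rmult_assoc, Rinv_l by nra. rewrite Rmult_1_r.
    replace (/ 2 * (2 * q * (s2 + (1 - / q) * t1)) * (a2 * b2)) with
      (/ 2 * (2 * q * (s2 + (1 - / q) * t1)) * (0 - a2) * (0 - b2)) by ring.
    rewrite <- H0. ring_simplify. unfold a, b. field. }
  assert (Ha2 : a2 <> 0) by lra. assert (Hb2 : b2 <> 0) by lra.
  assert (Ha : a <> 0) by (unfold a; lra). assert (Hb : b <> 0) by (unfold b; lra).
  assert (Hia2 : a2 * / a2 = 1) by (field; auto).
  assert (Hib2 : b2 * / b2 = 1) by (field; auto).
  assert (Hia : a * / a = 1) by (field; auto).
  assert (Hib : b * / b = 1) by (field; auto).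
  assert (Iia2 : / a2 < 0) by (apply Rinv_lt_0_compat; lra).
  assert (Iib2 : 0 < / b2) by (apply Rinv_0_lt_compat; lra).
  assert (Iia : / a < 0) by (apply Rinv_lt_0_compat; unfold a; lra).
  assert (Iib : 0 < / b) by (apply Rinv_0_lt_compat; unfold b; lra).
  assert (Ggb : good q a b a2 b2 b).
  { unfold good, Rdiv. unfold a, b in *. repeat split; auto.
    - nra.
    - nra.
    - assert (0 < q * b1) by nra. nra.
    - rewrite Rmult_assoc, Hib. lra. }
  assert (Gga : good q a b a2 b2 a).
  { unfold good, Rdiv. unfold a, b in *. repeat split; auto.
    - nra.
    - nra.
    - rewrite Rmult_assoc, Hia. lra.
    - assert (q * a1 < 0) by nra. nra. }
  set (ec := ecoef q s0 s1 s2 t0 t1).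
  assert (Hec1 : forall n, ec n (S n) = 0) by (intros; apply ecoef_gt; lia).
  assert (Hec2 : forall n, ec n (S (S n)) = 0) by (intros; apply ecoef_gt; lia).
  assert (Hecn : forall n, ec n n = 1) by (intros; apply ecoef_n).
  assert (Heig : forall n x, EqR q s0 s1 s2 t0 t1 (peval (ec n) (S (S n))) (- Acf q s2 t1 n) x).
  { intros n x. apply eig_poly; auto. }
  assert (Hrl : forall c, good q a b a2 b2 c -> is_lim_seq (fun N => rho (q ^ N * c)) 1).
  { intros c Gc. exact (rho_lim q a b a2 b2 Hq c Gc). }
  assert (Hrp : forall c N, good q a b a2 b2 c -> 0 < rho (q ^ N * c)).
  { intros c N Gc. destruct (good_args q a b a2 b2 Hq c N Gc) as [g1 [g2 [g3 g4]]].
    exact (rho_pos q a b a2 b2 Hq _ g1 g2 g3 g4). }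
  assert (Hexs : forall m n c, good q a b a2 b2 c ->
    ex_series (jackson_right q (fun x => peval (ec n) (S (S n)) x * peval (ec m) (S (S m)) x * rho x) c)).
  { intros m n c Gc. unfold jackson_right.
    apply (ex_series_geomlim q _ (ec n 0%nat * ec m 0%nat * 1)); auto.
    assert (Hu : is_lim_seq (fun N => q ^ N * c) 0) by (apply geo_lim0; auto).
    apply is_lim_seq_mult'; [apply is_lim_seq_mult'; apply peval_lim0; auto|auto]. }
  exists (fun n => peval (ec n) (S (S n))).
  exists (fun n => jackson q (fun x => peval (ec n) (S (S n)) x * peval (ec n) (S (S n)) x * rho x) a b).
  split; [|split; [|split]].
  -
    intros n. exists (ec n). split. rewrite Hecn; lra.
    intros x. rewrite peval_SS, Hec1, Hec2. unfold peval. ring.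
  -
    intros n.
    assert (Hlam : lambda n = - Acf q s2 t1 n) by (apply lam_eq; auto).
    rewrite Hlam.
    assert (Hnz : forall x, x <> 0 -> sigma1 x * Dq (/ q) (Dq q (peval (ec n) (S (S n)))) x
       + tau x * Dq q (peval (ec n) (S (S n))) x + - Acf q s2 t1 n * peval (ec n) (S (S n)) x = 0).
    { intros x Hx. pose proof (Heig n x) as E. unfold EqR in E.
      assert (Hx' : / q * x <> 0) by (apply Rmult_integral_contrapositive; split; auto; apply Rinv_neq_0_compat; auto).
      unfold Dq at 1. destruct (Req_EM_T x 0); [contradiction|].
      unfold Dq. destruct (Req_EM_T x 0); [contradiction|].
      destruct (Req_EM_T (/ q * x) 0); [contradiction|].
      replace (q * (/ q * x)) with x by (field; auto).
      replace (x / q) with (/ q * x) in E by (unfold Rdiv; ring).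
      unfold sig2, sig1 in E. unfold sigma1, tau.
      set (p0 := peval (ec n) (S (S n)) x) in *.
      set (pm := peval (ec n) (S (S n)) (/ q * x)) in *.
      set (pp := peval (ec n) (S (S n)) (q * x)) in *.
      set (A := Acf q s2 t1 n) in *.
      transitivity ((q ^ 2 * (s2 * x ^ 2 + s1 * x + s0) * (pm - p0) +
         q * (s2 * x ^ 2 + s1 * x + s0 + (1 - / q) * x * (t1 * x + t0)) * (pp - p0) +
         (1 - q) ^ 2 * x ^ 2 * - A * p0) / ((1 - q) ^ 2 * x ^ 2)).
      { field. repeat split; auto; lra. }
      rewrite E. field. split; auto; lra. }
    assert (HD1 : Dq q (peval (ec n) (S (S n))) = peval (dco q (ec n)) (S n)).
    { apply Dq_peval. lra. }
    assert (HD2 : Dq (/ q) (peval (dco q (ec n)) (S n)) = peval (dco (/ q) (dco q (ec n))) n).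
    { apply Dq_peval. intros H. assert (q = 1) by (rewrite <- (Rinv_inv q), H; apply Rinv_1). lra. }
    intros x. cbv beta.
    destruct (Req_EM_T x 0) as [->|Hx]; [|apply Hnz; auto].
    rewrite HD1, HD2 in Hnz |- *.
    set (H0f := fun y => sigma1 y * peval (dco (/ q) (dco q (ec n))) n y +
      tau y * peval (dco q (ec n)) (S n) y + - Acf q s2 t1 n * peval (ec n) (S (S n)) y).
    change (H0f 0 = 0).
    apply (lim_unique (fun N => H0f (q ^ N * 1))).
    + unfold H0f, sigma1, tau. rewrite !peval_0.
      assert (Hu : is_lim_seq (fun N => q ^ N * 1) 0) by (apply geo_lim0; auto).
      apply is_lim_seq_plus'. apply is_lim_seq_plus'.
      * apply is_lim_seq_mult'; [|apply peval_lim0; auto].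
        replace (s2 * 0 ^ 2 + s1 * 0 + s0) with (s2 * (0 * 0) + s1 * 0 + s0) by ring.
        apply is_lim_seq_plus'; [apply is_lim_seq_plus'|apply is_lim_seq_const].
        apply is_lim_seq_mult'; [apply is_lim_seq_const|].
        apply is_lim_seq_ext with (fun N => (q ^ N * 1) * (q ^ N * 1)). intros; ring.
        apply is_lim_seq_mult'; auto.
        apply is_lim_seq_mult'; [apply is_lim_seq_const|auto].
      * apply is_lim_seq_mult'; [|apply peval_lim0; auto].
        apply is_lim_seq_plus'; [|apply is_lim_seq_const].
        apply is_lim_seq_mult'; [apply is_lim_seq_const|auto].
      * apply is_lim_seq_mult'; [apply is_lim_seq_const|apply peval_lim0; auto].
    + apply is_lim_seq_ext with (fun _ => 0); [|apply is_lim_seq_const].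
      intros N. symmetry. apply Hnz.
      apply Rmult_integral_contrapositive; split; [apply pow_nonzero; auto|lra].
  -
    intros n. cbv beta.
    set (F := fun x => peval (ec n) (S (S n)) x * peval (ec n) (S (S n)) x * rho x).
    assert (Hnn : forall c j, good q a b a2 b2 c -> 0 <= jackson_right q F c j).
    { intros c j Gc. unfold jackson_right, F.
      pose proof (Hrp c j Gc). assert (0 < q ^ j) by (apply pow_lt; lra).
      apply Rmult_le_pos; [lra|]. apply Rmult_le_pos; [|lra].
      apply Rle_0_sqr. }
    destruct (peval_nonvanish q b n (ec n) Hq Hb) as [j Hj]. rewrite Hecn; lra.
    pose proof (Series_correct _ (Hexs n n b Ggb)) as Sb.
    pose proof (Series_correct _ (Hexs n n a Gga)) as Sa.
    fold F in Sa, Sb.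
    pose proof (series_ge_term _ _ j Sb (fun k => Hnn b k Ggb)) as Tb.
    pose proof (series_nonneg _ _ Sa (fun k => Hnn a k Gga)) as Na.
    assert (Tpos : 0 < jackson_right q F b j).
    { unfold jackson_right, F. rewrite peval_SS, Hec1, Hec2.
      pose proof (Hrp b j Ggb). assert (0 < q ^ j) by (apply pow_lt; lra).
      apply Rmult_lt_0_compat; auto. apply Rmult_lt_0_compat; auto.
      replace (peval (ec n) n (q ^ j * b) + 0 * (q ^ j * b) ^ S n + 0 * (q ^ j * b) ^ S (S n))
        with (peval (ec n) n (q ^ j * b)) by ring.
      assert (0 < Rsqr (peval (ec n) n (q ^ j * b))) by (apply Rsqr_pos_lt; auto).
      unfold Rsqr in H1. auto. }
    unfold jackson. unfold b, a in *.
    assert (0 < (1 - q) * b1 * Series (jackson_right q F b1)).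
    { apply Rmult_lt_0_compat. nra. lra. }
    assert (0 <= (1 - q) * - a1 * Series (jackson_right q F a1)).
    { apply Rmult_le_pos; [nra|lra]. }
    lra.
  -
    intros m n. cbv beta.
    set (F := fun x => peval (ec n) (S (S n)) x * peval (ec m) (S (S m)) x * rho x).
    split. { split; apply Hexs; auto. }
    destruct (Nat.eq_dec m n) as [->|Hmn]; [reflexivity|].
    set (lf := - Acf q s2 t1 n). set (lg := - Acf q s2 t1 m).
    assert (HK : (1 - q) ^ 2 * (lf - lg) <> 0).
    { apply Rmult_integral_contrapositive; split. apply pow_nonzero; lra.
      unfold lf, lg. intros E. apply (Acf_inj q s2 t1 Hq m n Hs2' Hr Hmn). lra. }
    set (L := 1 * (q * s0) * (ec m 0%nat * ec n 1%nat - ec n 0%nat * ec m 1%nat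
                    + q * (ec n 0%nat * ec m 1%nat - ec m 0%nat * ec n 1%nat))).
    assert (Hpear : forall c, good q a b a2 b2 c -> forall N,
       q * rho (q ^ S N * c) * sig1 s0 s1 s2 (q ^ S N * c)
       = rho (q ^ N * c) * sig2 q s0 s1 s2 t0 t1 (q ^ N * c)).
    { intros c Gc N. replace (q ^ S N * c) with (q * (q ^ N * c)) by (simpl; ring).
      destruct (good_args q a b a2 b2 Hq c N Gc) as [g1 [g2 [g3 g4]]].
      apply (pearson q a b a2 b2 Hq s0 s1 s2 t0 t1 Ha Hb Ha2 Hb2 Hsig1 Hsig2 _ g1 g2 g3 g4). }
    assert (Hser : forall c, good q a b a2 b2 c -> sig1 s0 s1 s2 c = 0 ->
       is_series (jackson_right q F c) (L / ((1 - q) ^ 2 * (lf - lg) * c))).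
    { intros c Gc Hc0. assert (Hc : c <> 0) by apply Gc.
      apply is_series_of_lim.
      pose proof (tele q s0 s1 s2 t0 t1 Hq rho (peval (ec n) (S (S n))) (peval (ec m) (S (S m)))
                   lf lg c Hc Hc0 (Hpear c Gc) (Heig n) (Heig m)) as Ht.
      pose proof (Blim q s0 s1 s2 t0 t1 rho (ec n) (ec m) (S n) (S m) c Hq Hc (Hrl c Gc)) as HB.
      fold L in HB.
      apply is_lim_seq_ext with (fun N => (rho (q ^ N * c) * sig2 q s0 s1 s2 t0 t1 (q ^ N * c) *
        (peval (ec n) (S (S n)) (q ^ N * c) * peval (ec m) (S (S m)) (q ^ S N * c) -
         peval (ec m) (S (S m)) (q ^ N * c) * peval (ec n) (S (S n)) (q ^ S N * c)) / (q ^ N * c))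
         / ((1 - q) ^ 2 * (lf - lg) * c)).
      { intros N. rewrite <- Ht.
        assert (Es : sum_f_R0 (fun j => q ^ j * c * rho (q ^ j * c) * peval (ec n) (S (S n)) (q ^ j * c) *
                      peval (ec m) (S (S m)) (q ^ j * c)) N = c * sum_f_R0 (jackson_right q F c) N).
        { rewrite <- sum_mult_l. apply sum_eq. intros j _. unfold jackson_right, F. ring. }
        rewrite Es. assert (lf - lg <> 0) by (intro E; apply HK; rewrite E; ring). field. repeat split; auto; lra. }
      apply is_lim_seq_div'; auto. apply is_lim_seq_const.
      }
    unfold jackson.
    rewrite (is_series_unique _ _ (Hser b Ggb ltac:(rewrite Hsig1; ring))).
    rewrite (is_series_unique _ _ (Hser a Gga ltac:(rewrite Hsig1; ring))).
    assert (lf - lg <> 0) by (intro E; apply HK; rewrite E; ring). field. repeat split; auto; lra.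
Qed.
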